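(* Let $G=(V,E)$ be a computation graph with vertices $v_1,\dots,v_n$, let $M$ be the fast-memory size, and let $J^*_G$ be the minimum number of non-trivial I/Os over all valid evaluations of $G$. Let $\tilde L$ and $W^{(k)}$ be as defined in the context. Then $J^*_G$ is at least the optimal value of $$\min_{X\in\mathcal{O}_G}\ \max_{1\le k\le n}\ \left(\operatorname{tr}\!\left(X^T\tilde L X W^{(k)}\right) - 2kM\right).$$
   Context: A computation graph is a finite directed acyclic graph $G=(V,E)$. Each vertex is an operation producing a single element, and an edge $(u,v)$ means the result of $u$ is an operand of $v$. Sources are the inputs and sinks are the outputs. Execution model: a single processor has a fast memory holding at most $M$ elements and an unbounded slow memory. Every vertex is evaluated exactly once (no recomputation), in an order that is topological with respect to $G$. To evaluate $v$, all parents of $v$ must be in fast memory; a parent not present must be read from slow memory. The eviction policy is unconstrained, but a value that is evicted while still needed by a later vertex must first be written to slow memory. Only non-trivial I/O is counted. Inputs can be placed directly into fast memory at no cost, and outputs are reported immediately at no cost when computed. However, an input that is evicted while still needed must be written to slow memory. Each transfer of one element between fast and slow memory counts as one I/O. An evaluation order is encoded as an $n\times n$ permutation matrix $X$ with $X_{ij}=1$ iff vertex $v_i$ is evaluated at time step $j$. $\mathcal{O}_G$ is the set of such matrices corresponding to topological orders of $G$. $\tilde G$ is the weighted undirected graph on $V$ containing, for each directed edge $(u,v)\in E$, the undirected edge $\{u,v\}$ with weight $1/d_{out}(u)$, where $d_{out}$ is out-degree in $G$. $\tilde L=\tilde D-\tilde A$ is its Laplacian, with $\tilde A$ the weighted adjacency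 matrix and $\tilde D$ the diagonal weighted-degree matrix. For $1\le k\le n$, split the time steps $1,\dots,n$ into $k$ consecutive blocks: the first $n \bmod k$ blocks have $\lfloor n/k\rfloor+1$ elements and the remaining blocks have $\lfloor n/k\rfloor$ elements. Let $\hat W^{(k)}\in\{0,1\}^{n\times k}$ have $(\hat W^{(k)})_{tj}=1$ iff time step $t$ lies in block $j$, and set $W^{(k)}=\hat W^{(k)}(\hat W^{(k)})^T$. *)

(* Defs.v *)
From HB Require Import structures.
From mathcomp Require Import all_boot all_order all_algebra.
From mathcomp Require Import fingroup perm.
Set Implicit Arguments. Unset Strict Implicit. Unset Printing Implicit Defensive.
Import Order.TTheory GRing.Theory Num.Theory.
Local Open Scope ring_scope.

(* A computation graph on vertices v_1..v_n, represented by 'I_n;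
   E u v means (u,v) is a directed edge (result of u is an operand of v). *)
Definition acyclic n (E : rel 'I_n) : Prop :=
  forall u v, E u v -> ~~ connect E v u.

Definition dout n (E : rel 'I_n) (u : 'I_n) : nat := #|[set v | E u v]|.

(* Operations of a single processor with fast memory F, slow memory S;
   D = set of already evaluated vertices. *)
Inductive op (n : nat) :=
| Compute of 'I_n   (* evaluate a vertex (for a source: place the input, free) *)
| Read of 'I_n
| Write of 'I_n
| Evict of 'I_n.

(* Evicting a value not stored in slow memory loses it (it can never be read
   back, and there is no recomputation). *)
Fixpoint exec n (E : rel 'I_n) (M : nat) (F S D : {set 'I_n}) (s : seq (op n))
  : bool :=
  match s with
  | [::] => D == setT
  | Compute v :: s' =>
      [&& v \notin D, [forall u, E u v ==> (u \in F)], (#|v |: F| <= M)%N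
        & exec E M (v |: F) S (v |: D) s']
  | Read v :: s' =>
      [&& v \in S, (#|v |: F| <= M)%N & exec E M (v |: F) S D s']
  | Write v :: s' => (v \in F) && exec E M F (v |: S) D s'
  | Evict v :: s' => exec E M (F :\ v) S D s'
  end.

Definition valid_eval n (E : rel 'I_n) (M : nat) (s : seq (op n)) : bool :=
  exec E M set0 set0 set0 s.

Definition is_io n (o : op n) : bool :=
  match o with Read _ | Write _ => true | _ => false end.

Definition io_cost n (s : seq (op n)) : nat := count (@is_io n) s.

(* s v = time step (0-based) at which vertex v is evaluated *)
Definition topological n (E : rel 'I_n) (s : 'S_n) : Prop :=
  forall u v, E u v -> (s u < s v)%N.

Definition order_mx (R : nzRingType) n (s : 'S_n) : 'M[R]_n :=
  \matrix_(i, j) (s i == j)%:R.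

Definition in_OG (R : nzRingType) n (E : rel 'I_n) (X : 'M[R]_n) : Prop :=
  exists s : 'S_n, topological E s /\ X = order_mx R s.

Definition wadj (R : fieldType) n (E : rel 'I_n) (i j : 'I_n) : R :=
  (E i j)%:R / (dout E i)%:R + (E j i)%:R / (dout E j)%:R.

Definition Atilde (R : fieldType) n (E : rel 'I_n) : 'M[R]_n :=
  \matrix_(i, j) wadj R E i j.

Definition Dtilde (R : fieldType) n (E : rel 'I_n) : 'M[R]_n :=
  diag_mx (\row_i \sum_(j < n) wadj R E i j).

Definition Ltilde (R : fieldType) n (E : rel 'I_n) : 'M[R]_n :=
  Dtilde R E - Atilde R E.

(* blocks j = 0..k-1 (0-based); the first n mod k have size n/k + 1 *)
Definition blk_size (n k j : nat) : nat := n %/ k + (j < n %% k).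
Definition blk_start (n k j : nat) : nat := \sum_(i < j) blk_size n k i.

(* time steps t = 0..n-1 (0-based) *)
Definition What (R : nzRingType) (n k : nat) : 'M[R]_(n, k) :=
  \matrix_(t, j) ((blk_start n k j <= t) && (t < blk_start n k j + blk_size n k j))%N%:R.

Definition Wk (R : nzRingType) (n k : nat) : 'M[R]_n :=
  What R n k *m (What R n k)^T.

(* Main.v *)
Require Import Defs.
From HB Require Import structures.
From mathcomp Require Import all_boot all_order all_algebra.
From mathcomp Require Import fingroup perm.
From mathcomp Require Import zify.
Set Implicit Arguments. Unset Strict Implicit. Unset Printing Implicit Defensive.
Import Order.TTheory GRing.Theory Num.Theory.

Definition getC n (o : op n) : option 'I_n := if o is Compute v then Some v else None.
Definition getR n (o : op n) : option 'I_n := if o is Read v then Some v else None.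
Definition getW n (o : op n) : option 'I_n := if o is Write v then Some v else None.
Definition comps n (t : seq (op n)) := pmap (@getC n) t.
Definition reads n (t : seq (op n)) := pmap (@getR n) t.
Definition writes n (t : seq (op n)) := pmap (@getW n) t.

Definition stT n := ({set 'I_n} * {set 'I_n} * {set 'I_n})%type.
Definition step n (st : stT n) (o : op n) : stT n :=
  let: (F, Sm, D) := st in
  match o with
  | Compute v => (v |: F, Sm, v |: D)
  | Read v => (v |: F, Sm, D)
  | Write v => (F, v |: Sm, D)
  | Evict v => (F :\ v, Sm, D)
  end.
Definition run n (st : stT n) (t : seq (op n)) := foldl (@step n) st t.

Definition sinv n M (st : stT n) : bool :=
  let: (F, Sm, D) := st in [&& F \subset D, Sm \subset D & (#|F| <= M)%N].

Definition exs n E M (st : stT n) t := let: (F, Sm, D) := st in exec E M F Sm D t.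

Lemma exec_cat n E M (st : stT n) t1 t2 :
  exs E M st (t1 ++ t2) -> exs E M (run st t1) t2 /\ (sinv M st -> sinv M (run st t1)).
Proof.
elim: t1 st => [|o t1 IH] [[F Sm] D] //=.
case: o => v /=.
- case/and4P => vD /forallP Hf HM Hex.
  case: (IH (_, _, _) Hex) => H1 H2; split => // /and3P [FD SmD _]; apply: H2.
  by rewrite /= (setUSS (subxx _) FD) HM (subset_trans SmD (subsetU1 _ _)).
- case/and3P => vS HM Hex.
  case: (IH (_, _, _) Hex) => H1 H2; split => // /and3P [FD SmD _]; apply: H2.
  by rewrite /= SmD HM subUset sub1set (subsetP SmD) // FD.
- case/andP => vF Hex.
  case: (IH (_, _, _) Hex) => H1 H2; split => // /and3P [FD SmD HM]; apply: H2.
  by rewrite /= FD HM subUset sub1set (subsetP FD) // SmD.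
- move=> Hex.
  case: (IH (_, _, _) Hex) => H1 H2; split => // /and3P [FD SmD HM]; apply: H2.
  rewrite /= SmD (subset_trans _ FD) ?subD1set //=.
  by apply: leq_trans HM; apply: subset_leq_card; rewrite subD1set.
Qed.

Lemma run_S n (st : stT n) t :
  (run st t).1.2 = st.1.2 :|: [set u in writes t].
Proof.
elim: t st => [|o t IH] [[F Sm] D] /=.
  by apply/setP => u; rewrite !inE orbF.
rewrite IH; case: o => v /=; apply/setP => u; rewrite !inE /=; try by rewrite ?orbA.
all: by case: (u == v); case: (u \in Sm).
Qed.

Lemma run_D n (st : stT n) t :
  (run st t).2 = st.2 :|: [set u in comps t].
Proof.
elim: t st => [|o t IH] [[F Sm] D] /=.
  by apply/setP => u; rewrite !inE orbF.
rewrite IH; case: o => v /=; apply/setP => u; rewrite !inE /=; try by rewrite ?orbA.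
all: by case: (u == v); case: (u \in D).
Qed.

Lemma need_read n E M (F Sm D : {set 'I_n}) t1 t2 u v :
  exec E M F Sm D (t1 ++ t2) -> u \notin F -> u \notin comps t1 ->
  v \in comps t1 -> E u v -> u \in reads t1.
Proof.
elim: t1 F Sm D => [|o t1 IH] F Sm D //=.
case: o => w /=.
- case/and4P => _ /forallP Hf _ Hex uF.
  rewrite /comps /= !inE => /norP [uw ut] /orP [/eqP vw|vt] Euv.
    by subst; move: (Hf u); rewrite Euv /= (negbTE uF).
  apply: (IH _ _ _ Hex) => //; by rewrite !inE negb_or uw.
- case/and3P => _ _ Hex uF ut vt Euv.
  rewrite /reads /= inE; case: (eqVneq u w) => //= uw.
  apply: (IH _ _ _ Hex) => //; by rewrite !inE negb_or uw.
- case/andP => _ Hex uF ut vt Euv; exact: (IH _ _ _ Hex).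
- move=> Hex uF ut vt Euv; apply: (IH _ _ _ Hex) => //; by rewrite !inE negb_and uF orbT.
Qed.

Lemma lost n E M (F Sm D : {set 'I_n}) t u v :
  exec E M F Sm D t -> u \in D -> u \notin F -> u \notin Sm ->
  v \in comps t -> ~~ E u v.
Proof.
elim: t F Sm D => [|o t IH] F Sm D //=.
case: o => w /=.
- case/and4P => wD /forallP Hf _ Hex uD uF uS.
  have uw : u != w by apply: contraNneq wD => <-.
  rewrite /comps /= inE => /orP [/eqP vw|vt].
    by subst; move: (Hf u); apply: contraTN => ->; rewrite (negbTE uF).
  apply: (IH _ _ _ Hex) => //; by rewrite !inE ?negb_or ?uw ?uD ?orbT.
- case/and3P => wS _ Hex uD uF uS vt.
  have uw : u != w by apply: contraNneq uS => ->.
  apply: (IH _ _ _ Hex) => //; by rewrite !inE negb_or uw.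
- case/andP => wF Hex uD uF uS vt.
  have uw : u != w by apply: contraNneq uF => ->.
  apply: (IH _ _ _ Hex) => //; by rewrite !inE negb_or uw.
- move=> Hex uD uF uS vt; apply: (IH _ _ _ Hex) => //; by rewrite !inE negb_and uF orbT.
Qed.

Lemma exec_comps n E M (F Sm D : {set 'I_n}) t :
  exec E M F Sm D t ->
  [/\ uniq (comps t), {in comps t, forall u, u \notin D} & forall u, (u \in D) || (u \in comps t)].
Proof.
elim: t F Sm D => [|o t IH] F Sm D /=.
  by move/eqP => ->; split => // u; rewrite inE.
case: o => w /=.
- case/and4P => wD _ _ /IH [H1 H2 H3].
  have wt : w \notin comps t by apply/negP => /H2; rewrite setU11.
  split.
  + by rewrite /comps /= wt.
  + move=> u; rewrite /comps /= inE => /orP [/eqP ->|ut] //.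
    by move: (H2 u ut); rewrite !inE negb_or => /andP [].
  + move=> u; move: (H3 u); rewrite /comps /= !inE.
    by case: (u == w); rewrite ?orbT //= ?orbF.
- by case/and3P => _ _ /IH.
- by case/andP => _ /IH.
- by move/IH.
Qed.

Lemma exec_topo n E M (F Sm D : {set 'I_n}) t :
  exec E M F Sm D t -> F \subset D -> Sm \subset D ->
  forall u v, E u v -> v \in comps t ->
  (u \in D) || (index u (comps t) < index v (comps t))%N.
Proof.
elim: t F Sm D => [|o t IH] F Sm D //=.
case: o => w /=.
- case/and4P => wD /forallP Hf _ Hex FD SmD u v Euv.
  rewrite /comps /= inE.
  case: (eqVneq v w) => [vw|vw] /=.
    by subst; move=> _; move: (Hf u); rewrite Euv /= => /(subsetP FD) ->.
  move=> vt.
  have := IH _ _ _ Hex (setUSS (subxx _) FD) (subset_trans SmD (subsetU1 _ _)) u v Euv vt.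
  rewrite !inE /comps; case: (eqVneq w u) => [wu|wu] /=; first by subst; rewrite orbT.
  by rewrite ltnS.
- case/and3P => wS _ Hex FD SmD; apply: (IH _ _ _ Hex) => //.
  by rewrite subUset sub1set (subsetP SmD) // FD.
- case/andP => wF Hex FD SmD; apply: (IH _ _ _ Hex) => //.
  by rewrite subUset sub1set (subsetP FD) // SmD.
- move=> Hex FD SmD; apply: (IH _ _ _ Hex) => //.
  by rewrite (subset_trans _ FD) // subD1set.
Qed.

Fixpoint pos n (m : nat) (t : seq (op n)) : nat :=
  match t with
  | [::] => 0
  | o :: t' => if getC o is Some _ then (if m is m'.+1 then (pos m' t').+1 else 0)
               else (pos m t').+1
  end.

Lemma comps_take_pos n m (t : seq (op n)) : comps (take (pos m t) t) = take m (comps t).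
Proof.
elim: t m => [|o t IH] m /=; first by [].
case: o => v /=; rewrite /comps /= -/(comps _) ?IH //.
case: m => [|m] /=; first by [].
by rewrite -/(comps _) IH.
Qed.

Lemma pos_mono n m1 m2 (t : seq (op n)) : m1 <= m2 -> pos m1 t <= pos m2 t.
Proof.
elim: t m1 m2 => [|o t IH] m1 m2 //= le12.
case: o => v /=; try by rewrite ltnS IH.
by case: m1 le12 => [|m1] //; case: m2 => [|m2] // le12; rewrite ltnS IH.
Qed.

Lemma io_split n (t : seq (op n)) : io_cost t = size (reads t) + size (writes t).
Proof.
elim: t => [|o t IH] //.
rewrite /io_cost /reads /writes /=; case: o => v /=; rewrite -/(io_cost _) IH //.
by rewrite addnS.
Qed.

Lemma card_seqset n (r : seq 'I_n) : #|[set u in r]| <= size r.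
Proof. by rewrite cardsE card_size. Qed.

Definition init n : stT n := (set0, set0, set0).

Lemma seg_bound n (E : rel 'I_n) M s m1 m2 (h : pred 'I_n) :
  valid_eval E M s -> m1 <= m2 ->
  (forall u, h u = (m1 <= index u (comps s) < m2)) ->
  #|[set u | h u && [exists v, E u v && ~~ h v]]|
    + #|[set u | ~~ h u && [exists v, E u v && h v]]|
  <= io_cost (take (pos m2 s - pos m1 s) (drop (pos m1 s) s)) + 2 * M.
Proof.
move=> Hv le12 hE.
set cs := comps s.
set p1 := pos m1 s; set p2 := pos m2 s.
set seg := take (p2 - p1) (drop p1 s).
have lep : p1 <= p2 by apply: pos_mono.
have [cs_uniq _ cs_all] := exec_comps Hv.
have in_cs u : u \in cs by move: (cs_all u); rewrite inE.
have topo u v : E u v -> index u cs < index v cs.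
  move=> Euv; have := exec_topo Hv (sub0set _) (sub0set _) Euv (in_cs v).
  by rewrite inE.
have take2 : take p2 s = take p1 s ++ seg by rewrite -takeD subnKC.
have drop1 : drop p1 s = seg ++ drop p2 s by rewrite -{1}(cat_take_drop (p2 - p1) (drop p1 s)) drop_drop subnK.
have cpos m u : (u \in comps (take (pos m s) s)) = (index u cs < m).
  by rewrite comps_take_pos in_take.
have cseg u : (u \in comps seg) = h u.
  have U : uniq (comps (take p1 s) ++ comps seg).
    by rewrite /comps -pmap_cat -take2 -/(comps _) comps_take_pos take_uniq.
  have E2 : (u \in comps (take p1 s) ++ comps seg) = (index u cs < m2).
    by rewrite /comps -pmap_cat -take2 -/(comps _) cpos.
  rewrite hE leqNgt -(cpos m1 u).
  rewrite mem_cat in E2.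
  move: U; rewrite cat_uniq => /and3P [_ Hd _].
  case: (boolP (u \in comps (take p1 s))) => Hu1 /=.
    apply/negP => Hs; move/negP: Hd; apply; apply/hasP; by exists u.
  by rewrite -E2 (negbTE Hu1).
have [ex1 inv1] : exs E M (run (init n) (take p1 s)) (drop p1 s) /\ (sinv M (init n) -> sinv M (run (init n) (take p1 s))).
  by apply: exec_cat; rewrite cat_take_drop.
have [ex2 inv2] : exs E M (run (init n) (take p2 s)) (drop p2 s) /\ (sinv M (init n) -> sinv M (run (init n) (take p2 s))).
  by apply: exec_cat; rewrite cat_take_drop.
have S1E := run_S (init n) (take p1 s); have D1E := run_D (init n) (take p1 s).
have S2E := run_S (init n) (take p2 s); have D2E := run_D (init n) (take p2 s).
move: ex1 inv1 S1E D1E ex2 inv2 S2E D2E.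
case: (run _ (take p1 s)) => [[F1 S1] D1]; case: (run _ (take p2 s)) => [[F2 S2] D2] /=.
rewrite !set0U => ex1 inv1 S1E D1E ex2 inv2 S2E D2E.
subst S1 D1 S2 D2.
have /and3P [_ SD1 F1M] := inv1 ltac:(by rewrite !sub0set cards0).
have /and3P [_ _ F2M] := inv2 ltac:(by rewrite !sub0set cards0).
have HIn : [set u | ~~ h u && [exists v, E u v && h v]] \subset F1 :|: [set u in reads seg].
  apply/subsetP => u; rewrite !inE => /andP [hu /existsP [v /andP [Euv hv]]].
  case: (boolP (u \in F1)) => //= uF.
  rewrite drop1 in ex1.
  have H1 : u \notin comps seg by rewrite cseg.
  have H2 : v \in comps seg by rewrite cseg.
  exact: (need_read ex1 uF H1 H2 Euv).
have HOut : [set u | h u && [exists v, E u v && ~~ h v]] \subset F2 :|: [set u in writes seg].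
  apply/subsetP => u; rewrite !inE => /andP [hu /existsP [v /andP [Euv hv]]].
  case: (boolP (u \in F2)) => //= uF.
  have vin : v \in comps (drop p2 s).
    have := in_cs v; rewrite /cs -{1}(cat_take_drop p2 s) /comps pmap_cat mem_cat.
    rewrite -/(comps _) -/(comps _) cpos.
    move: hv; rewrite hE; move: hu; rewrite hE => /andP [hu1 _].
    have := topo _ _ Euv.
    rewrite /cs => H1 H2 /orP [H3|//]; exfalso; move/negP: H2; apply; apply/andP; split; lia.
  have uD2 : u \in [set u in comps (take p2 s)].
    by rewrite inE cpos; move: hu; rewrite hE => /andP [].
  case: (boolP (u \in [set u in writes (take p2 s)])) => [|uS].
    rewrite take2 /writes pmap_cat inE mem_cat -/(writes _) -/(writes _) => /orP [uw1|] //.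
    have : u \in [set u in comps (take p1 s)].
      by apply: (subsetP SD1); rewrite inE.
    by rewrite inE cpos; move: hu; rewrite hE => /andP [H1 _]; rewrite ltnNge H1.
  by move: (lost ex2 uD2 uF uS vin); rewrite Euv.
rewrite io_split.
have cU (A B : {set 'I_n}) : #|A :|: B| <= #|A| + #|B| by rewrite -cardsUI leq_addr.
apply: leq_trans (leq_add (subset_leq_card HOut) (subset_leq_card HIn)) _.
apply: leq_trans (leq_add (cU _ _) (cU _ _)) _.
apply: leq_trans (leq_add (leq_add F2M (card_seqset (writes seg))) (leq_add F1M (card_seqset (reads seg)))) _.
lia.
Qed.

Lemma sum_segs n (s : seq (op n)) (g : nat -> nat) K :
  (forall j, g j <= g j.+1) ->
  \sum_(j < K) io_cost (take (pos (g j.+1) s - pos (g j) s) (drop (pos (g j) s) s))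
  <= io_cost s.
Proof.
move=> gm.
have H : forall K0, \sum_(j < K0) io_cost (take (pos (g j.+1) s - pos (g j) s) (drop (pos (g j) s) s))
   + io_cost (take (pos (g 0) s) s) = io_cost (take (pos (g K0) s) s).
  elim => [|K0 IH]; first by rewrite big_ord0.
  rewrite big_ord_recr /= -addnA [X in _ + X]addnC addnA IH.
  rewrite -{2}(subnKC (pos_mono s (gm K0))) takeD /io_cost count_cat.
  by [].
have Hle p : io_cost (take p s) <= io_cost s.
  by rewrite -{2}(cat_take_drop p s) /io_cost count_cat leq_addr.
apply: leq_trans (Hle (pos (g K) s)); by rewrite -H leq_addr.
Qed.



Local Open Scope ring_scope.

Lemma sum_sel (R : nzRingType) n (σ : 'S_n) (a : 'I_n) (F : 'I_n -> R) :
  \sum_d ((σ d == a)%:R * F d) = F (σ^-1 a)%g.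
Proof.
rewrite (bigD1 (σ^-1 a)%g) //= permKV eqxx mul1r big1 ?addr0 // => d Hd.
by rewrite (can2_eq (permK σ) (permKV σ)) (negbTE Hd) mul0r.
Qed.

Lemma sum_selr (R : nzRingType) n (σ : 'S_n) (a : 'I_n) (F : 'I_n -> R) :
  \sum_d (F d * (σ d == a)%:R) = F (σ^-1 a)%g.
Proof.
by rewrite -(sum_sel σ a F); apply: eq_bigr => d _; rewrite mulr_natr mulr_natl.
Qed.

Lemma trace_form (R : realFieldType) n k (σ : 'S_n) (L : 'M[R]_n) (H : 'M[R]_(n, k)) :
  \tr ((order_mx R σ)^T *m L *m order_mx R σ *m (H *m H^T)) =
  \sum_(j < k) \sum_u \sum_v L u v * (H (σ u) j * H (σ v) j).
Proof.
have XLX a b : ((order_mx R σ)^T *m L *m order_mx R σ) a b = L (σ^-1 a)%g (σ^-1 b)%g.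
  rewrite !mxE.
  under eq_bigr => c _ do rewrite !mxE.
  rewrite sum_selr.
  under eq_bigr => d _ do rewrite !mxE.
  by rewrite sum_sel.
rewrite /mxtrace.
under eq_bigr => i _ do rewrite mxE.
rewrite (reindex_inj (@perm_inj _ σ)) /=.
under eq_bigr => u _ do rewrite (reindex_inj (@perm_inj _ σ)) /=.
rewrite [RHS]exchange_big /=; apply: eq_bigr => u _.
rewrite [RHS]exchange_big /=; apply: eq_bigr => v _.
rewrite XLX !permK mxE mulr_sumr; apply: eq_bigr => j _.
by rewrite mxE (mulrC (H (σ v) j)).
Qed.

Lemma dout_sum (R : realFieldType) n (E : rel 'I_n) u :
  \sum_v ((E u v)%:R : R) = (dout E u)%:R.
Proof.
rewrite -natr_sum /dout -sum1_card [in RHS]big_mkcond /=.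
by congr (_%:R); apply: eq_bigr => v _; rewrite inE; case: (E u v).
Qed.

Lemma key_G (R : realFieldType) n (E : rel 'I_n) u (c : pred 'I_n) :
  \sum_v (((E u v)%:R : R) / (dout E u)%:R * (c v)%:R)
    <= ([exists v, E u v && c v])%:R.
Proof.
case: (boolP [exists v, E u v && c v]) => [/existsP [w /andP [Euw _]]|Hn].
  have dpos : (0 < dout E u)%N.
    by rewrite /dout card_gt0; apply/set0Pn; exists w; rewrite inE.
  apply: le_trans (_ : \sum_v ((E u v)%:R / (dout E u)%:R) <= 1).
    apply: ler_sum => v _; case: (c v); rewrite ?mulr1 ?mulr0 //.
    by rewrite divr_ge0 ?ler0n.
  rewrite -mulr_suml dout_sum divff //.
  by rewrite pnatr_eq0 -lt0n.
rewrite big1 // => v _.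
move: Hn; rewrite negb_exists => /forallP /(_ v).
by case: (E u v); case: (c v); rewrite ?mul0r ?mulr0.
Qed.

Lemma sum_sel1 (R : nzRingType) n (a : 'I_n) (F : 'I_n -> R) :
  \sum_d ((a == d)%:R * F d) = F a.
Proof.
rewrite (bigD1 a) //= eqxx mul1r big1 ?addr0 // => d Hd.
by rewrite eq_sym (negbTE Hd) mul0r.
Qed.

Lemma lap_eq (R : realFieldType) n (E : rel 'I_n) (hb : pred 'I_n) :
  \sum_u \sum_v Ltilde R E u v * ((hb u)%:R * (hb v)%:R) =
  \sum_u \sum_v wadj R E u v * (hb u && ~~ hb v)%:R.
Proof.
apply: eq_bigr => u _.
have -> : \sum_v Ltilde R E u v * ((hb u)%:R * (hb v)%:R) =
  \sum_v ((u == v)%:R * ((\sum_w wadj R E u w) * ((hb u)%:R * (hb v)%:R)))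
  - \sum_v wadj R E u v * ((hb u)%:R * (hb v)%:R).
  rewrite -sumrB; apply: eq_bigr => v _.
  rewrite !mxE mulrBl; congr (_ - _).
  have Mb (x y : R) (b : bool) : x *+ b * y = (b%:R : R) * (x * y).
    by case: b; rewrite ?mul1r ?mulr1n ?mulr0n ?mul0r.
  by rewrite Mb.
rewrite sum_sel1.
rewrite mulr_suml -sumrB; apply: eq_bigr => v _.
by rewrite -mulrBr; congr (_ * _); case: (hb u); case: (hb v); rewrite /= ?mulr1 ?mulr0 ?subr0 ?subrr.
Qed.

Lemma card_sumR (R : nzRingType) n (A : {set 'I_n}) :
  (#|A|%:R : R) = \sum_u ((u \in A)%:R).
Proof.
rewrite -sum1_card natr_sum [LHS]big_mkcond /=.
by apply: eq_bigr => u _; case: (u \in A).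
Qed.

Lemma lap_bound (R : realFieldType) n (E : rel 'I_n) (hb : pred 'I_n) :
  \sum_u \sum_v Ltilde R E u v * ((hb u)%:R * (hb v)%:R) <=
  (#|[set u | hb u && [exists v, E u v && ~~ hb v]]|
    + #|[set u | ~~ hb u && [exists v, E u v && hb v]]|)%:R.
Proof.
rewrite lap_eq.
have Hsplit : \sum_u \sum_v wadj R E u v * (hb u && ~~ hb v)%:R =
  \sum_u \sum_v ((E u v)%:R / (dout E u)%:R * (hb u && ~~ hb v)%:R) +
  \sum_u \sum_v ((E u v)%:R / (dout E u)%:R * (hb v && ~~ hb u)%:R).
  rewrite [X in _ = _ + X]exchange_big -big_split /=; apply: eq_bigr => u _.
  rewrite -big_split /=; apply: eq_bigr => v _.
  by rewrite /wadj mulrDl.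
rewrite Hsplit natrD; apply: lerD.
  rewrite card_sumR; apply: ler_sum => u _.
  rewrite inE; case: (hb u) => /=.
    rewrite -[X in _ <= X]/(([exists v, E u v && ~~ hb v])%:R : R).
    apply: le_trans (key_G R E u (fun v => ~~ hb v)); apply: ler_sum => v _.
    by rewrite le_eqVlt eqxx.
  by rewrite big1 // => v _; rewrite mulr0.
rewrite card_sumR; apply: ler_sum => u _.
rewrite inE; case: (hb u) => /=.
  by rewrite big1 // => v _; rewrite andbF mulr0.
apply: le_trans (key_G R E u hb); apply: ler_sum => v _.
by rewrite andbT le_eqVlt eqxx.
Qed.

Theorem theorem4p3 (R : realFieldType) (n : nat) (E : rel 'I_n) (M : nat) :
  acyclic E ->
  forall s : seq (op n), valid_eval E M s ->
  exists X : 'M[R]_n, in_OG E X /\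
    forall k : nat, (1 <= k <= n)%N ->
      \tr (X^T *m Ltilde R E *m X *m Wk R n k) - (2 * k * M)%:R
        <= (io_cost s)%:R.
Proof.
move=> _ s Hv.
have [cs_uniq _ cs_all] := exec_comps Hv.
set cs := comps s.
have in_cs u : u \in cs by move: (cs_all u); rewrite inE.
have Hsize : size cs = n.
  rewrite -[RHS](size_enum_ord n); apply: perm_size; apply: uniq_perm => //.
    exact: enum_uniq.
  by move=> u; rewrite mem_enum in_cs.
have Hi u : (index u cs < n)%N by rewrite -[X in (_ < X)%N]Hsize index_mem in_cs.
have finj : injective (fun u => Ordinal (Hi u)).
  move=> u v /(congr1 val) /= Huv.
  by rewrite -(nth_index u (in_cs u)) Huv nth_index.
pose σ := perm finj.
have σE u : nat_of_ord (σ u) = index u cs by rewrite permE.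
exists (order_mx R σ); split.
  exists σ; split => // u v Euv; rewrite !σE.
  by have := exec_topo Hv (sub0set _) (sub0set _) Euv (in_cs v); rewrite inE.
move=> k _.
rewrite /Wk trace_form.
pose g := fun j => blk_start n k j.
have gS j : g j.+1 = (g j + blk_size n k j)%N by rewrite /g /blk_start big_ord_recr.
have gm j : (g j <= g j.+1)%N by rewrite gS leq_addr.
pose hb (j : nat) := fun u : 'I_n => (g j <= σ u < g j.+1)%N.
have Hterm (j : 'I_k) :
  \sum_u \sum_v Ltilde R E u v * (What R n k (σ u) j * What R n k (σ v) j)
  <= (io_cost (take (pos (g j.+1) s - pos (g j) s) (drop (pos (g j) s) s)) + 2 * M)%:R.
  have -> : \sum_u \sum_v Ltilde R E u v * (What R n k (σ u) j * What R n k (σ v) j)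
     = \sum_u \sum_v Ltilde R E u v * ((hb j u)%:R * (hb j v)%:R).
    apply: eq_bigr => u _; apply: eq_bigr => v _.
    by rewrite !mxE /hb gS.
  apply: le_trans (lap_bound R E (hb j)) _.
  rewrite ler_nat; apply: seg_bound => // u.
  by rewrite /hb σE.
rewrite lerBlDr.
apply: le_trans (ler_sum _ (fun j _ => Hterm j)) _.
rewrite -natr_sum -natrD ler_nat big_split /= sum_nat_const card_ord.
have := sum_segs s k gm.
by move=> H; rewrite (mulnC 2 k) -mulnA leq_add2r.
Qed.
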